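(* Let $g(x)=\sum_{n\ge 1}\frac{2\,(4n+1)!}{(n+1)!\,(3n+2)!}\,x^n$, regarded as a formal power series. For integers $n\ge1$ and $r\ge 2$ define $A_r(n)=\frac{[x^n](g(x))^r}{[x^n]g(x)}$ and $B_r=\lim_{n\to\infty}A_r(n)$. Then for all integers $n\ge 1$: $$A_2(n)=\frac{10(n-1)(n^2+14n+12)}{3(3n+5)(3n+4)(n+2)},\qquad B_2=\frac{10}{27};$$ $$A_3(n)=\frac{5(n-1)(n-2)(5n^4+160n^3+1803n^2+3768n+2016)}{3(3n+8)(3n+5)(3n+7)(3n+4)(n+3)(n+2)},\qquad B_3=\frac{25}{243};$$ $$A_4(n)=\frac{20(n-1)(n-2)(n-3)(25n^6+1350n^5+31495n^4+347406n^3+1211092n^2+1580304n+665280)}{27(3n+11)(3n+8)(3n+5)(3n+10)(3n+7)(3n+4)(n+4)(n+3)(n+2)},\qquad B_4=\frac{500}{19683}.$$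
   Context: For a formal power series $f(x)$, $[x^n]f(x)$ denotes the coefficient of $x^n$ in $f(x)$. *)

(* Defs.v *)
From HB Require Import structures.
From mathcomp Require Import all_boot all_order all_algebra.
From mathcomp Require Import all_classical all_reals all_analysis.
Set Implicit Arguments. Unset Strict Implicit. Unset Printing Implicit Defensive.
Import Order.TTheory GRing.Theory Num.Theory.
Local Open Scope ring_scope.

Definition gcoef (n : nat) : rat :=
  if n == 0%N then 0
  else 2 * ((4 * n).+1)`!%:R / ((n.+1)`!%:R * ((3 * n).+2)`!%:R).

Definition gtrunc (N : nat) : {poly rat} := \poly_(i < N.+1) gcoef i.

(* [x^n] (g(x))^r : the coefficient of x^n in a power of a formal power
   series only depends on its coefficients of degree <= n, so it equals the
   coefficient of x^n in the r-th power of the degree-n truncation. *)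
Definition gpow_coef (r n : nat) : rat := ((gtrunc n) ^+ r)`_n.

Definition A (r n : nat) : rat := gpow_coef r n / gcoef n.

(* Main.v *)
Require Import Defs.
From HB Require Import structures.
From mathcomp Require Import all_boot all_order all_algebra.
From mathcomp Require Import all_classical all_reals all_analysis.
From mathcomp Require Import ring lra zify.
Import Order.TTheory GRing.Theory Num.Theory.
Import numFieldNormedType.Exports.
Local Open Scope classical_set_scope.
Local Open Scope ring_scope.
Definition L (j n : nat) : rat :=
  if j is i.+1 then i.+1%:R * (4 * n + i)`!%:R / (n`!%:R * (3 * n + i.+1)`!%:R)
  else (n == 0%N)%:R.

Lemma fact_neq0 (n : nat) : (n`!%:R : rat) != 0.
Proof. by rewrite pnatr_eq0 -lt0n fact_gt0. Qed.

Lemma factSr (n : nat) : ((n.+1)`!%:R : rat) = (n%:R + 1) * n`!%:R.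
Proof. by rewrite factS natrM natr1. Qed.

Ltac nzt := match goal with
 | |- is_true (_ && _) => apply/andP; split; nzt
 | |- is_true (?x`!%:R != 0) => exact: fact_neq0
 | |- _ => apply: lt0r_neq0; (lra || nra)
end.

Lemma L0 j : L j 0 = 1.
Proof.
case: j => [//|i] /=; rewrite muln0 !add0n fact0 mul1r factS natrM.
have := ler0n rat i => ?.
by field; nzt.
Qed.

Lemma Lrec i m : L i.+1 m.+1 = L i m.+1 + L (i + 4) m.
Proof.
have := ler0n rat m => ?.
case: i => [|k] /=.
  rewrite add0r /=.
  have -> : (4 * m.+1 + 0 = (4 * m + 3).+1)%N by lia.
  have -> : (3 * m.+1 + 1 = 3 * m + 4)%N by lia.
  rewrite !factSr ?natrD ?natrM.
  field.
  nzt.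
have := ler0n rat k => ?.
have -> : (4 * m.+1 + k.+1 = (4 * m + k + 4).+1)%N by lia.
have -> : (4 * m.+1 + k = (4 * m + k + 4))%N by lia.
have -> : (4 * m + (k + 4) = (4 * m + k + 4))%N by lia.
have -> : (3 * m.+1 + k.+2 = (3 * m + k + 4).+1)%N by lia.
have -> : (3 * m.+1 + k.+1 = (3 * m + k + 4))%N by lia.
have -> : (3 * m + (k + 4).+1 = (3 * m + k + 4).+1)%N by lia.
rewrite !factSr -!natr1 ?natrD ?natrM.
field.
nzt.
Qed.

Lemma Lconv n a b : \sum_(k < n.+1) L a k * L b (n - k) = L (a + b) n.
Proof.
elim/ltn_ind: n a b => n IHn a b.
elim: a b => [|a IHa] b.
  rewrite big_ord_recl /= subn0 mul1r big1 ?addr0 // => i _.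
  by rewrite /= mul0r.
case: n IHn IHa => [|m] IHn IHa.
  by rewrite big_ord1 subn0 !L0 mulr1.
rewrite big_ord_recl L0 mul1r subn0.
under eq_bigr => i _ do rewrite lift0 subSS Lrec mulrDl.
rewrite big_split.
have H1 : L b m.+1 + \sum_(i < m.+1) L a i.+1 * L b (m - i) = L (a + b) m.+1.
  rewrite -IHa [in RHS]big_ord_recl L0 mul1r subn0; by congr (_ + _).
have H2 := IHn m (ltnSn m) (a + 4)%N b.
by rewrite addrA H1 H2 addSn Lrec addnAC.
Qed.

Definition T (N : nat) : {poly rat} := \poly_(i < N.+1) L 1 i.

Lemma Tpow N j n : (n <= N)%N -> ((T N) ^+ j)`_n = L j n.
Proof.
elim: j n => [|j IHj] n hn; first by rewrite expr0 coef1.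
rewrite exprS coefM -(Lconv n 1 j).
apply: eq_bigr => i _.
rewrite coef_poly IHj; last by apply: leq_trans (leq_subr i n) hn.
have -> : (i < N.+1)%N by apply: leq_trans (ltn_ord i) _.
by [].
Qed.

Lemma coef_pow_eq N (p q : {poly rat}) r n :
  (forall i, (i <= N)%N -> p`_i = q`_i) -> (n <= N)%N -> (p ^+ r)`_n = (q ^+ r)`_n.
Proof.
move=> H; elim: r n => [|r IH] n hn; first by rewrite !expr0.
rewrite !exprS !coefM; apply: eq_bigr => i _.
have hi : (i <= N)%N by apply: leq_trans hn; rewrite -ltnS.
by rewrite H // IH //; apply: leq_trans (leq_subr i n) hn.
Qed.

Lemma L1_neq0 n : L 1 n != 0.
Proof. by rewrite /= mulf_neq0 ?invr_neq0 ?mulf_neq0 ?fact_neq0 ?oner_neq0. Qed.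

Lemma L1E n : L 1 n = (4 * n)`!%:R / (n`!%:R * ((3 * n).+1)`!%:R).
Proof. by rewrite /L mul1r addn0 addn1. Qed.

Ltac nzt2 := match goal with
 | |- is_true (_ && _) => apply/andP; split; nzt2
 | |- is_true (?x`!%:R != 0) => exact: fact_neq0
 | |- is_true (L 1 _ != 0) => exact: L1_neq0
 | |- _ => apply: lt0r_neq0; (lra || nra)
end.

Lemma Lstep j n : L j.+2 n =
  L j.+1 n * ((j.+2)%:R * (4 * n + j.+1)%:R) / ((j.+1)%:R * (3 * n + j.+2)%:R).
Proof.
rewrite /= !addnS !factSr -!natr1 ?natrD ?natrM.
have := ler0n rat j => ?; have := ler0n rat n => ?.
by field; nzt2.
Qed.

Lemma gcoefE n : (1 <= n)%N ->
  gcoef n = L 1 n * (2 * (4 * n%:R + 1) / ((n%:R + 1) * (3 * n%:R + 2))).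
Proof.
move=> hn; rewrite /gcoef L1E; have -> : (n == 0%N) = false by case: n hn.
rewrite !factSr -!natr1 ?natrD ?natrM.
have := ler0n rat n => ?.
by field; nzt2.
Qed.

Lemma gcoef_dec i : gcoef i = L 2 i *+ 2 - L 3 i - (i == 0)%:R.
Proof.
case: (posnP i) => [->|hi]; first by rewrite !L0 /gcoef /=; ring.
rewrite (_ : false%:R = 0) // subr0 gcoefE // !Lstep -mulr_natr -!natr1 ?natrD ?natrM.
have := ler0n rat i => ?.
by field; nzt2.
Qed.

Definition Q N := T N ^+ 2 *+ 2 - T N ^+ 3 - 1.

Lemma gtrunc_pow r n : gpow_coef r n = (Q n ^+ r)`_n.
Proof.
rewrite /gpow_coef; apply: (@coef_pow_eq n) => // i hi.
rewrite coef_poly ltnS hi gcoef_dec /Q !coefB coefMn coef1 !Tpow //.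
Qed.

Lemma A2E n : (1 <= n)%N -> A 2 n = 10 * (n%:R - 1) * (n%:R ^+ 2 + 14 * n%:R + 12)
                 / (3 * (3 * n%:R + 5) * (3 * n%:R + 4) * (n%:R + 2)).
Proof.
move=> hn; rewrite /A gtrunc_pow.
have -> : Q n ^+ 2 = 1 - T n ^+ 2 *+ 4 + T n ^+ 3 *+ 2 + T n ^+ 4 *+ 4 - T n ^+ 5 *+ 4 + T n ^+ 6 by rewrite /Q; ring.
rewrite ?coefD ?coefB ?coefN ?coefMn coef1 !Tpow //.
have -> : (n == 0%N) = false by case: n hn.
rewrite (_ : false%:R = 0) // gcoefE // !Lstep ?natrD ?natrM.
have : 1 <= n%:R :> rat by rewrite ler1n.
move=> ?.
by field; nzt2.
Qed.

Lemma A3E n : (1 <= n)%N -> A 3 n = 5 * (n%:R - 1) * (n%:R - 2)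
                   * (5 * n%:R ^+ 4 + 160 * n%:R ^+ 3 + 1803 * n%:R ^+ 2
                      + 3768 * n%:R + 2016)
                 / (3 * (3 * n%:R + 8) * (3 * n%:R + 5) * (3 * n%:R + 7)
                      * (3 * n%:R + 4) * (n%:R + 3) * (n%:R + 2)).
Proof.
move=> hn; rewrite /A gtrunc_pow.
have -> : Q n ^+ 3 = - 1 + T n ^+ 2 *+ 6 - T n ^+ 3 *+ 3 - T n ^+ 4 *+ 12 + T n ^+ 5 *+ 12 + T n ^+ 6 *+ 5 - T n ^+ 7 *+ 12 + T n ^+ 8 *+ 6 - T n ^+ 9 by rewrite /Q; ring.
rewrite ?coefD ?coefB ?coefN ?coefMn coef1 !Tpow //.
have -> : (n == 0%N) = false by case: n hn.
rewrite (_ : false%:R = 0) // gcoefE // !Lstep ?natrD ?natrM.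
have : 1 <= n%:R :> rat by rewrite ler1n.
move=> ?.
by field; nzt2.
Qed.

Lemma A4E n : (1 <= n)%N -> A 4 n = 20 * (n%:R - 1) * (n%:R - 2) * (n%:R - 3)
                   * (25 * n%:R ^+ 6 + 1350 * n%:R ^+ 5 + (31 * 1000 + 495) * n%:R ^+ 4
                      + (347 * 1000 + 406) * n%:R ^+ 3 + (1211 * 1000 + 92) * n%:R ^+ 2
                      + (1580 * 1000 + 304) * n%:R + (665 * 1000 + 280))
                 / (27 * (3 * n%:R + 11) * (3 * n%:R + 8) * (3 * n%:R + 5)
                      * (3 * n%:R + 10) * (3 * n%:R + 7) * (3 * n%:R + 4)
                      * (n%:R + 4) * (n%:R + 3) * (n%:R + 2)).
Proof.
move=> hn; rewrite /A gtrunc_pow.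
have -> : Q n ^+ 4 = 1 - T n ^+ 2 *+ 8 + T n ^+ 3 *+ 4 + T n ^+ 4 *+ 24 - T n ^+ 5 *+ 24 - T n ^+ 6 *+ 26 + T n ^+ 7 *+ 48 - T n ^+ 8 *+ 8 - T n ^+ 9 *+ 28 + T n ^+ 10 *+ 24 - T n ^+ 11 *+ 8 + T n ^+ 12 by rewrite /Q; ring.
rewrite ?coefD ?coefB ?coefN ?coefMn coef1 !Tpow //.
have -> : (n == 0%N) = false by case: n hn.
rewrite (_ : false%:R = 0) // gcoefE // !Lstep ?natrD ?natrM.
have : 1 <= n%:R :> rat by rewrite ler1n.
move=> ?.
by field; nzt2.
Qed.

Lemma rat_lim (R : realType) (P Q : {poly R}) (f : nat -> R) (l : R) :
  0 < Q.[0] -> l = P.[0] / Q.[0] ->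
  (forall n, f n.+1 = P.[harmonic n] / Q.[harmonic n]) ->
  f @ \oo --> l.
Proof.
move=> hQ -> hf.
rewrite -cvg_shiftS.
have -> : [sequence f n.+1]_n = (fun n => (horner P \o harmonic) n / (horner Q \o harmonic) n).
  by apply/funext => n /=; rewrite hf.
have hP : (horner P \o harmonic) @ \oo --> P.[0].
  by apply: continuous_cvg; [exact: continuous_horner | exact: cvg_harmonic].
have hQ' : (horner Q \o harmonic) @ \oo --> Q.[0].
  by apply: continuous_cvg; [exact: continuous_horner | exact: cvg_harmonic].
exact: (cvgM hP (cvgV (lt0r_neq0 hQ) hQ')).
Qed.

Lemma neq0_R (R : realType) (x : R) : 0 < x -> x != 0.
Proof. by move=> h; rewrite gt_eqF. Qed.

Ltac nzR := match goal with
 | |- is_true (_ && _) => apply/andP; split; nzR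
 | |- _ => apply: neq0_R; (lra || nra)
end.

Ltac hor := rewrite ?(hornerM, hornerD, hornerN, hornerC, hornerX).

Lemma lim2 (R : realType) : (fun n : nat => (ratr (A 2 n) : R)) @ \oo --> (10 / 27 : R).
Proof.
apply: (@rat_lim R (10%:P * (1%:P - 'X) * (1%:P + 'X * (14%:P + 12%:P * 'X)))
                   (3%:P * (3%:P + 5%:P * 'X) * (3%:P + 4%:P * 'X) * (1%:P + 2%:P * 'X))).
- by hor; lra.
- by hor; field.
move=> n; rewrite A2E //.
hor => /=.
have : 0 <= n%:R :> R by [].
move=> ?.
by field; nzR.
Qed.

Lemma lim3 (R : realType) : (fun n : nat => (ratr (A 3 n) : R)) @ \oo --> (25 / 243 : R).
Proof.
apply: (@rat_lim R (5%:P * (1%:P - 'X) * (1%:P - 2%:P * 'X) *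
          (5%:P + 'X * (160%:P + 'X * (1803%:P + 'X * (3768%:P + 2016%:P * 'X)))))
   (3%:P * (3%:P + 8%:P * 'X) * (3%:P + 5%:P * 'X) * (3%:P + 7%:P * 'X) *
      (3%:P + 4%:P * 'X) * (1%:P + 3%:P * 'X) * (1%:P + 2%:P * 'X))).
- by hor; lra.
- by hor; field.
move=> n; rewrite A3E //.
hor => /=.
have : 0 <= n%:R :> R by [].
move=> ?.
by field; nzR.
Qed.

Lemma lim4 (R : realType) : (fun n : nat => (ratr (A 4 n) : R)) @ \oo --> (500 / (19 * 1000 + 683) : R).
Proof.
apply: (@rat_lim R (20%:P * (1%:P - 'X) * (1%:P - 2%:P * 'X) * (1%:P - 3%:P * 'X) *
          (25%:P + 'X * (1350%:P + 'X * ((31 * 1000 + 495)%:P + 'X * ((347 * 1000 + 406)%:P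
           + 'X * ((1211 * 1000 + 92)%:P + 'X * ((1580 * 1000 + 304)%:P
           + (665 * 1000 + 280)%:P * 'X)))))))
   (27%:P * (3%:P + 11%:P * 'X) * (3%:P + 8%:P * 'X) * (3%:P + 5%:P * 'X) *
      (3%:P + 10%:P * 'X) * (3%:P + 7%:P * 'X) * (3%:P + 4%:P * 'X) *
      (1%:P + 4%:P * 'X) * (1%:P + 3%:P * 'X) * (1%:P + 2%:P * 'X))).
- by hor; lra.
- by hor; field.
move=> n; rewrite A4E //.
hor => /=.
have : 0 <= n%:R :> R by [].
move=> ?.
by field; nzR.
Qed.

Theorem mainTheorem3 (R : realType) :
  (forall n : nat, (1 <= n)%N ->
         A 2 n = 10 * (n%:R - 1) * (n%:R ^+ 2 + 14 * n%:R + 12)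
                 / (3 * (3 * n%:R + 5) * (3 * n%:R + 4) * (n%:R + 2)))
   /\ (fun n : nat => (ratr (A 2 n) : R)) @ \oo --> (10 / 27 : R)
   /\ (forall n : nat, (1 <= n)%N ->
         A 3 n = 5 * (n%:R - 1) * (n%:R - 2)
                   * (5 * n%:R ^+ 4 + 160 * n%:R ^+ 3 + 1803 * n%:R ^+ 2
                      + 3768 * n%:R + 2016)
                 / (3 * (3 * n%:R + 8) * (3 * n%:R + 5) * (3 * n%:R + 7)
                      * (3 * n%:R + 4) * (n%:R + 3) * (n%:R + 2)))
   /\ (fun n : nat => (ratr (A 3 n) : R)) @ \oo --> (25 / 243 : R)
   /\ (forall n : nat, (1 <= n)%N ->
         A 4 n = 20 * (n%:R - 1) * (n%:R - 2) * (n%:R - 3)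
                   * (25 * n%:R ^+ 6 + 1350 * n%:R ^+ 5 + (31 * 1000 + 495) * n%:R ^+ 4
                      + (347 * 1000 + 406) * n%:R ^+ 3 + (1211 * 1000 + 92) * n%:R ^+ 2
                      + (1580 * 1000 + 304) * n%:R + (665 * 1000 + 280))
                 / (27 * (3 * n%:R + 11) * (3 * n%:R + 8) * (3 * n%:R + 5)
                      * (3 * n%:R + 10) * (3 * n%:R + 7) * (3 * n%:R + 4)
                      * (n%:R + 4) * (n%:R + 3) * (n%:R + 2)))
   /\ (fun n : nat => (ratr (A 4 n) : R)) @ \oo --> (500 / (19 * 1000 + 683) : R).
Proof.
split; first exact: A2E.
split; first exact: lim2.
split; first exact: A3E.
split; first exact: lim3.
split; first exact: A4E.
exact: lim4.
Qed.
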